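(* Let $\alpha,\beta,\gamma\in\Bbbk^n$. (1) Let $\lambda\in(\Bbbk^\times)^n$ and set $\alpha'_i=\lambda_i\lambda_{i-1}^{-1}\alpha_i$, $\beta'_i=\lambda_{i+1}\lambda_{i-1}^{-1}\beta_i$, $\gamma'_i=\lambda_{i-1}^{-1}\gamma_i$ for all $i$. Then the linear map $\phi_\lambda$ with $\phi_\lambda(e_i)=e_i$, $\phi_\lambda(u_i)=\lambda_iu_i$, $\phi_\lambda(d_i)=d_i$ extends to an isomorphism $\mathcal H(\alpha,\beta,\gamma)\to\mathcal H(\alpha',\beta',\gamma')$. (2) Set $\alpha'_i=\alpha_{i-1}$, $\beta'_i=\beta_{i-1}$, $\gamma'_i=\gamma_{i-1}$. Then the linear map $\psi$ with $\psi(e_i)=e_{i+1}$, $\psi(u_i)=u_{i+1}$, $\psi(d_i)=d_{i+1}$ extends to an isomorphism $\mathcal H(\alpha,\beta,\gamma)\to\mathcal H(\alpha',\beta',\gamma')$. (3) Suppose $\beta_i\neq0$ for all $i$, and set $\alpha'_i=-\beta_{n-i-1}^{-1}\alpha_{n-i-1}$, $\beta'_i=\beta_{n-i-1}^{-1}$, $\gamma'_i=-\beta_{n-i-1}^{-1}\gamma_{n-i-1}$. Then the linear map $\pi$ with $\pi(e_i)=e_{n-i}$, $\pi(u_i)=d_{n-i-1}$, $\pi(d_i)=u_{n-i-1}$ extends to an isomorphism $\mathcal H(\alpha,\beta,\gamma)\to\mathcal H(\alpha',\beta',\gamma')$.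
   Context: $\Bbbk$ is an algebraically closed field of characteristic zero. Fix $n\ge1$; indices mod $n$, $Q_0=\{0,\dots,n-1\}$. $Q$ is the quiver with vertices $Q_0$ and arrows $u_i:i\to i+1$, $d_i:i+1\to i$; paths are written left to right, $e_i$ is the trivial path at $i$. $\mathcal H(\alpha,\beta,\gamma)$ is $\Bbbk Q$ modulo the relations $d_{i-1}u_{i-1}u_i=\alpha_iu_id_iu_i+\beta_iu_iu_{i+1}d_{i+1}+\gamma_iu_i$ and $d_id_{i-1}u_{i-1}=\alpha_id_iu_id_i+\beta_iu_{i+1}d_{i+1}d_i+\gamma_id_i$ for all $i\in Q_0$. *)

(* Defs.v *)
From HB Require Import structures.
From mathcomp Require Import all_boot all_order all_algebra.
Set Implicit Arguments. Unset Strict Implicit. Unset Printing Implicit Defensive.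
Import GRing.Theory.
Local Open Scope ring_scope.

(* Vertices of Q are 'I_n (indices mod n).
   vnext i = i+1, vprev i = i-1, vneg i = n-i, vneg1 i = n-i-1 (all mod n). *)
Definition vnext {n} (i : 'I_n) : 'I_n := ordS i.
Definition vprev {n} (i : 'I_n) : 'I_n := ord_pred i.
Definition vneg {n} (i : 'I_n) : 'I_n := ordS (rev_ord i).
Definition vneg1 {n} (i : 'I_n) : 'I_n := rev_ord i.

Section Defs.
Variables (K : fieldType) (n : nat).

Definition alg_hom (A B : algType K) (f : A -> B) : Prop :=
  [/\ forall x y, f (x + y) = f x + f y,
      forall (k : K) x, f (k *: x) = k *: f x,
      forall x y, f (x * y) = f x * f y
    & f 1 = 1].

Definition alg_iso (A B : algType K) (f : A -> B) : Prop :=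
  alg_hom f /\ bijective f.

(* Defining relations of the path algebra KQ in terms of the generators
   e_i (trivial paths), u_i : i -> i+1, d_i : i+1 -> i.
   Paths are written left to right, so the product p * q is the
   concatenation "p then q". *)
Definition quiver_rels (A : algType K) (e u d : 'I_n -> A) : Prop :=
  [/\ forall i j, e i * e j = (if i == j then e i else 0),
      \sum_i e i = 1,
      forall i, u i = e i * u i * e (vnext i)
    & forall i, d i = e (vnext i) * d i * e i].

Definition H_rels (alpha beta gamma : 'I_n -> K) (A : algType K)
    (e u d : 'I_n -> A) : Prop :=
  forall i,
    d (vprev i) * u (vprev i) * u i
      = alpha i *: (u i * d i * u i)
        + beta i *: (u i * u (vnext i) * d (vnext i))
        + gamma i *: u i
  /\ d i * d (vprev i) * u (vprev i)
      = alpha i *: (d i * u i * d i)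
        + beta i *: (u (vnext i) * d (vnext i) * d i)
        + gamma i *: d i.

(* (A, e, u, d) is a presentation of H(alpha,beta,gamma) = KQ / (relations):
   the generators satisfy the quiver and H relations, and A is universal
   (initial) among K-algebras with such elements. *)
Definition is_H (alpha beta gamma : 'I_n -> K) (A : algType K)
    (e u d : 'I_n -> A) : Prop :=
  [/\ quiver_rels e u d,
      H_rels alpha beta gamma e u d,
      (forall (B : algType K) (eB uB dB : 'I_n -> B),
          quiver_rels eB uB dB -> H_rels alpha beta gamma eB uB dB ->
          exists f : A -> B, [/\ alg_hom f,
              forall i, f (e i) = eB i,
              forall i, f (u i) = uB i
            & forall i, f (d i) = dB i])
    & (forall (B : algType K) (f g : A -> B), alg_hom f -> alg_hom g ->
          (forall i, f (e i) = g (e i)) ->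
          (forall i, f (u i) = g (u i)) ->
          (forall i, f (d i) = g (d i)) -> f =1 g)].

End Defs.

(* Main.v *)
Require Import Defs.
From HB Require Import structures.
From mathcomp Require Import all_boot all_order all_algebra zify ring.
Import GRing.Theory.
Set Implicit Arguments. Unset Strict Implicit.
Local Open Scope ring_scope.

Lemma vneg1_prev {n} (i : 'I_n) : vneg1 (vprev i) = vnext (vneg1 i).
Proof.
apply/val_inj => /=.
case: i => [[|i] Hi] /=.
  rewrite add0n modn_small; last lia.
  have -> : (n - 1).+1 = n by lia.
  rewrite modnn; lia.
rewrite modnDr modn_small; last lia.
rewrite modn_small; lia.
Qed.

Lemma vnext_inj {n} : injective (@vnext n). Proof. exact: ordS_inj. Qed.
Lemma vprev_inj {n} : injective (@vprev n). Proof. exact: ord_pred_inj. Qed.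
Lemma vnextK n (i : 'I_n) : vprev (vnext i) = i. Proof. exact: ordSK. Qed.
Lemma vprevK n (i : 'I_n) : vnext (vprev i) = i. Proof. exact: ord_predK. Qed.
Lemma vneg1_next {n} (i : 'I_n) : vneg1 (vnext i) = vprev (vneg1 i).
Proof.
have H := vneg1_prev (vnext i); rewrite vnextK in H.
by rewrite [in RHS]H vnextK.
Qed.

Lemma vneg1K n (i : 'I_n) : vneg1 (vneg1 i) = i. Proof. exact: rev_ordK. Qed.
Lemma vnegE n (i : 'I_n) : vneg i = vnext (vneg1 i). Proof. by []. Qed.
Lemma vnegK n (i : 'I_n) : vneg (vneg i) = i.
Proof. by rewrite !vnegE vneg1_next vneg1K vprevK. Qed.
Lemma vneg_next {n} (i : 'I_n) : vneg (vnext i) = vneg1 i.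
Proof. by rewrite vnegE vneg1_next vprevK. Qed.
Lemma vneg_inj {n} : injective (@vneg n).
Proof. exact: can_inj (@vnegK n). Qed.


Lemma alg_hom_id (K : fieldType) (A : algType K) : alg_hom (@id A).
Proof. by split. Qed.

Lemma alg_hom_comp (K : fieldType) (A B C : algType K) (g : B -> C) (f : A -> B) :
  alg_hom g -> alg_hom f -> alg_hom (g \o f).
Proof.
case=> gD gZ gM g1 [fD fZ fM f1]; split=> /=.
- by move=> x y; rewrite fD gD.
- by move=> k x; rewrite fZ gZ.
- by move=> x y; rewrite fM gM.
- by rewrite f1 g1.
Qed.

Lemma iso_gen (K : fieldType) n (p1 p2 p3 q1 q2 q3 : 'I_n -> K)
  (A A' : algType K) (e u d : 'I_n -> A) (e' u' d' : 'I_n -> A')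
  (eB uB dB : 'I_n -> A') (eC uC dC : 'I_n -> A) :
  is_H p1 p2 p3 e u d -> is_H q1 q2 q3 e' u' d' ->
  quiver_rels eB uB dB -> H_rels p1 p2 p3 eB uB dB ->
  quiver_rels eC uC dC -> H_rels q1 q2 q3 eC uC dC ->
  (forall g : A' -> A, alg_hom g -> (forall i, g (e' i) = eC i) ->
     (forall i, g (u' i) = uC i) -> (forall i, g (d' i) = dC i) ->
     [/\ forall i, g (eB i) = e i, forall i, g (uB i) = u i &
         forall i, g (dB i) = d i]) ->
  (forall f : A -> A', alg_hom f -> (forall i, f (e i) = eB i) ->
     (forall i, f (u i) = uB i) -> (forall i, f (d i) = dB i) ->
     [/\ forall i, f (eC i) = e' i, forall i, f (uC i) = u' i &
         forall i, f (dC i) = d' i]) ->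
  exists f : A -> A', [/\ alg_iso f, forall i, f (e i) = eB i,
     forall i, f (u i) = uB i & forall i, f (d i) = dB i].
Proof.
case=> _ _ HA uA [_ _ HA' uA'] qB hB qC hC Hg Hf.
have [f [fh fe fu fd]] := HA A' eB uB dB qB hB.
have [g [gh ge gu gd]] := HA' A eC uC dC qC hC.
have [g1 g2 g3] := Hg g gh ge gu gd.
have [f1 f2 f3] := Hf f fh fe fu fd.
exists f; split=> //; split=> //; exists g.
- apply: (uA A (g \o f) id (alg_hom_comp gh fh) (alg_hom_id A)) => i /=.
  + by rewrite fe g1.
  + by rewrite fu g2.
  + by rewrite fd g3.
- apply: (uA' A' (f \o g) id (alg_hom_comp fh gh) (alg_hom_id A')) => i /=.
  + by rewrite ge f1.
  + by rewrite gu f2.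
  + by rewrite gd f3.
Qed.
Lemma comb (K : fieldType) (V : lmodType K) (Y M D : V) (a b c a' b' c' : K) :
  b' * b = 1 -> a' = - (b' * a) -> c' = - (b' * c) ->
  Y = a' *: M + b' *: (a *: M + b *: Y + c *: D) + c' *: D.
Proof.
move=> hb -> ->; rewrite !scalerDr !scalerA hb scale1r !scaleNr.
set X := _ *: M; set Z := _ *: D.
by rewrite -[X + Y + Z]addrA addKr addrK.
Qed.

Lemma refl_data (K : fieldType) n (a b c a' b' c' : 'I_n -> K)
  (A : algType K) (e u d : 'I_n -> A) :
  (forall i, b' i * b (vneg1 i) = 1) ->
  (forall i, a' i = - (b' i * a (vneg1 i))) ->
  (forall i, c' i = - (b' i * c (vneg1 i))) ->
  quiver_rels e u d -> H_rels a b c e u d ->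
  quiver_rels (fun i => e (vneg i)) (fun i => d (vneg1 i)) (fun i => u (vneg1 i))
  /\ H_rels a' b' c' (fun i => e (vneg i)) (fun i => d (vneg1 i)) (fun i => u (vneg1 i)).
Proof.
move=> hb ha hc [Q1 Qs Qu Qd] HH; split; first split.
- by move=> i j; rewrite Q1 (inj_eq vneg_inj).
- by rewrite -Qs; symmetry; apply: reindex_inj; exact: vneg_inj.
- by move=> i; rewrite vneg_next vnegE; exact: Qd.
- by move=> i; rewrite vneg_next vnegE; exact: Qu.
move=> i; rewrite vneg1_prev vneg1_next.
have [H1 H2] := HH (vneg1 i).
split.
- rewrite H2; apply: comb => //.
- rewrite H1; apply: comb => //.
Qed.

Lemma perm_data (K : fieldType) n (a b c a2 b2 c2 : 'I_n -> K)
  (A : algType K) (e u d : 'I_n -> A) (s : 'I_n -> 'I_n) :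
  injective s -> (forall i, s (vnext i) = vnext (s i)) ->
  (forall i, s (vprev i) = vprev (s i)) ->
  (forall i, a2 i = a (s i)) -> (forall i, b2 i = b (s i)) ->
  (forall i, c2 i = c (s i)) ->
  quiver_rels e u d -> H_rels a b c e u d ->
  quiver_rels (fun i => e (s i)) (fun i => u (s i)) (fun i => d (s i))
  /\ H_rels a2 b2 c2 (fun i => e (s i)) (fun i => u (s i)) (fun i => d (s i)).
Proof.
move=> si sn sp ha hb hc [Q1 Qs Qu Qd] HH; split; first split.
- by move=> i j; rewrite Q1 (inj_eq si).
- by rewrite -Qs; symmetry; apply: reindex_inj.
- by move=> i; rewrite sn; exact: Qu.
- by move=> i; rewrite sn; exact: Qd.
by move=> i; rewrite sn sp ha hb hc; exact: HH.
Qed.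

Lemma scale_data (K : fieldType) n (a b c a2 b2 c2 mu : 'I_n -> K)
  (A : algType K) (e u d : 'I_n -> A) :
  (forall i, mu i != 0) ->
  (forall i, a2 i = mu (vprev i) * (mu i)^-1 * a i) ->
  (forall i, b2 i = mu (vprev i) * (mu (vnext i))^-1 * b i) ->
  (forall i, c2 i = mu (vprev i) * c i) ->
  quiver_rels e u d -> H_rels a b c e u d ->
  quiver_rels e (fun i => mu i *: u i) d
  /\ H_rels a2 b2 c2 e (fun i => mu i *: u i) d.
Proof.
move=> mu0 ha hb hc [Q1 Qs Qu Qd] HH; split; first split => //.
- by move=> i; rewrite -scalerAr -scalerAl -Qu.
move=> i; have [H1 H2] := HH i.
have m1 := mu0 i; have m2 := mu0 (vprev i); have m3 := mu0 (vnext i).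
split.
- do 3 rewrite -?scalerAl -?scalerAr.
  rewrite !scalerA H1 !scalerDr !scalerA ha hb hc.
  congr (_ *: _ + _ *: _ + _ *: _); by field.
- do 3 rewrite -?scalerAl -?scalerAr.
  rewrite !scalerA H2 !scalerDr !scalerA ha hb hc.
  congr (_ *: _ + _ *: _ + _ *: _); by field.
Qed.

Theorem lemma5p1 (K : closedFieldType) (hK : [pchar K] =i pred0)
    (n : nat) (hn : (0 < n)%N) (alpha beta gamma : 'I_n -> K) :
  (* (1) rescaling *)
  (forall lam : 'I_n -> K, (forall i, lam i != 0) ->
   forall (A : algType K) (e u d : 'I_n -> A)
          (A' : algType K) (e' u' d' : 'I_n -> A'),
   is_H alpha beta gamma e u d ->
   is_H (fun i => lam i * (lam (vprev i))^-1 * alpha i)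
        (fun i => lam (vnext i) * (lam (vprev i))^-1 * beta i)
        (fun i => (lam (vprev i))^-1 * gamma i) e' u' d' ->
   exists f : A -> A', [/\ alg_iso f,
     forall i, f (e i) = e' i,
     forall i, f (u i) = lam i *: u' i
   & forall i, f (d i) = d' i])
  /\
  (* (2) rotation *)
  (forall (A : algType K) (e u d : 'I_n -> A)
          (A' : algType K) (e' u' d' : 'I_n -> A'),
   is_H alpha beta gamma e u d ->
   is_H (fun i => alpha (vprev i)) (fun i => beta (vprev i))
        (fun i => gamma (vprev i)) e' u' d' ->
   exists f : A -> A', [/\ alg_iso f,
     forall i, f (e i) = e' (vnext i),
     forall i, f (u i) = u' (vnext i)
   & forall i, f (d i) = d' (vnext i)])
  /\
  (* (3) reflection *)
  ((forall i, beta i != 0) ->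
   forall (A : algType K) (e u d : 'I_n -> A)
          (A' : algType K) (e' u' d' : 'I_n -> A'),
   is_H alpha beta gamma e u d ->
   is_H (fun i => - (beta (vneg1 i))^-1 * alpha (vneg1 i))
        (fun i => (beta (vneg1 i))^-1)
        (fun i => - (beta (vneg1 i))^-1 * gamma (vneg1 i)) e' u' d' ->
   exists f : A -> A', [/\ alg_iso f,
     forall i, f (e i) = e' (vneg i),
     forall i, f (u i) = d' (vneg1 i)
   & forall i, f (d i) = u' (vneg1 i)]).
Proof.
split; [|split].
- move=> lam lam0 A e u d A' e' u' d' HA HA'.
  have HA0 := HA; have HA0' := HA'.
  case: HA => qA hA _ _; case: HA' => qA' hA' _ _.
  have [qB hB] : quiver_rels e' (fun i => lam i *: u' i) d' /\
     H_rels alpha beta gamma e' (fun i => lam i *: u' i) d'.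
    by apply: (scale_data _ _ _ _ qA' hA') => // i; field; rewrite ?lam0.
  have lam0' : forall i, (lam i)^-1 != 0 by move=> i; rewrite invr_eq0.
  have [qC hC] : quiver_rels e (fun i => (lam i)^-1 *: u i) d /\
     H_rels (fun i => lam i * (lam (vprev i))^-1 * alpha i)
        (fun i => lam (vnext i) * (lam (vprev i))^-1 * beta i)
        (fun i => (lam (vprev i))^-1 * gamma i) e (fun i => (lam i)^-1 *: u i) d.
    by apply: (scale_data lam0' _ _ _ qA hA) => // i; rewrite ?invrK; field; rewrite ?lam0.
  apply: (iso_gen HA0 HA0' qB hB qC hC).
  + move=> g [gD gZ gM g1] ge gu gd; split=> i //.
    by rewrite gZ gu scalerA mulfV ?lam0 // scale1r.
  + move=> f [fD fZ fM f1] fe fu fd; split=> i //.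
    by rewrite fZ fu scalerA mulVf ?lam0 // scale1r.
- move=> A e u d A' e' u' d' HA HA'.
  have HA0 := HA; have HA0' := HA'.
  case: HA => qA hA _ _; case: HA' => qA' hA' _ _.
  have [qB hB] : quiver_rels (fun i => e' (vnext i)) (fun i => u' (vnext i))
        (fun i => d' (vnext i)) /\
     H_rels alpha beta gamma (fun i => e' (vnext i)) (fun i => u' (vnext i))
        (fun i => d' (vnext i)).
    apply: (perm_data vnext_inj _ _ _ _ _ qA' hA') => // i;
      by rewrite ?vnextK ?vprevK.
  have [qC hC] : quiver_rels (fun i => e (vprev i)) (fun i => u (vprev i))
        (fun i => d (vprev i)) /\
     H_rels (fun i => alpha (vprev i)) (fun i => beta (vprev i))
        (fun i => gamma (vprev i)) (fun i => e (vprev i)) (fun i => u (vprev i))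
        (fun i => d (vprev i)).
    apply: (perm_data vprev_inj _ _ _ _ _ qA hA) => // i;
      by rewrite ?vnextK ?vprevK.
  apply: (iso_gen HA0 HA0' qB hB qC hC).
  + by move=> g _ ge gu gd; split=> i; rewrite ?ge ?gu ?gd vnextK.
  + by move=> f _ fe fu fd; split=> i; rewrite ?fe ?fu ?fd vprevK.
- move=> b0 A e u d A' e' u' d' HA HA'.
  have HA0 := HA; have HA0' := HA'.
  case: HA => qA hA _ _; case: HA' => qA' hA' _ _.
  have [qB hB] : quiver_rels (fun i => e' (vneg i)) (fun i => d' (vneg1 i))
        (fun i => u' (vneg1 i)) /\
     H_rels alpha beta gamma (fun i => e' (vneg i)) (fun i => d' (vneg1 i))
        (fun i => u' (vneg1 i)).
    apply: (refl_data _ _ _ qA' hA') => i; rewrite vneg1K.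
    * by rewrite mulfV.
    * by field; rewrite b0.
    * by field; rewrite b0.
  have [qC hC] : quiver_rels (fun i => e (vneg i)) (fun i => d (vneg1 i))
        (fun i => u (vneg1 i)) /\
     H_rels (fun i => - (beta (vneg1 i))^-1 * alpha (vneg1 i))
        (fun i => (beta (vneg1 i))^-1)
        (fun i => - (beta (vneg1 i))^-1 * gamma (vneg1 i))
        (fun i => e (vneg i)) (fun i => d (vneg1 i)) (fun i => u (vneg1 i)).
    apply: (refl_data _ _ _ qA hA) => i.
    * by rewrite mulVf.
    * by rewrite mulNr.
    * by rewrite mulNr.
  apply: (iso_gen HA0 HA0' qB hB qC hC).
  + by move=> g _ ge gu gd; split=> i; rewrite ?ge ?gu ?gd ?vnegK ?vneg1K.
  + by move=> f _ fe fu fd; split=> i; rewrite ?fe ?fu ?fd ?vnegK ?vneg1K.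
Qed.
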